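(* The string rewriting system $W'=\{0_2\rhd\to 0_3\rhd\}\cup A\cup B$ is terminating.
   Context: An SRS induces $u\ell v\to urv$ for each rule $\ell\to r$; terminating means no infinite rewrite sequence. Alphabet $\{0_2,1_2,0_3,1_3,2_3,\lhd,\rhd\}$; $A=\{0_20_3\to0_30_2,\ 0_21_3\to0_31_2,\ 0_22_3\to1_30_2,\ 1_20_3\to1_31_2,\ 1_21_3\to2_30_2,\ 1_22_3\to2_31_2\}$; $B=\{\lhd0_3\to\lhd1_2,\ \lhd1_3\to\lhd0_20_2,\ \lhd2_3\to\lhd0_21_2\}$. *)

(* Defs.v *)
From Stdlib Require Import List.
Import ListNotations.

Inductive sym : Type := O2 | I2 | O3 | I3 | T3 | Lhd | Rhd.

Definition srs := list (list sym * list sym).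

Inductive rstep (R : srs) : list sym -> list sym -> Prop :=
| rstep_intro : forall u v l r, In (l, r) R -> rstep R (u ++ l ++ v) (u ++ r ++ v).

Definition terminating (R : srs) : Prop :=
  ~ exists f : nat -> list sym, forall n, rstep R (f n) (f (S n)).

Definition A_rules : srs :=
  [ ([O2; O3], [O3; O2]);
    ([O2; I3], [O3; I2]);
    ([O2; T3], [I3; O2]);
    ([I2; O3], [I3; I2]);
    ([I2; I3], [T3; O2]);
    ([I2; T3], [T3; I2]) ].

Definition B_rules : srs :=
  [ ([Lhd; O3], [Lhd; I2]);
    ([Lhd; I3], [Lhd; O2; O2]);
    ([Lhd; T3], [Lhd; O2; I2]) ].

Definition W' : srs := ([O2; Rhd], [O3; Rhd]) :: A_rules ++ B_rules.

(* Main.v *)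
Require Import Defs.
From Stdlib Require Import List Arith Lia PArith ZArith.
Import ListNotations.

Fixpoint tz (p : positive) : nat :=
  match p with xO q => S (tz q) | _ => 0 end.

Lemma tz3 : forall c, tz (c * 3) = tz c.
Proof. induction c; simpl; auto. Qed.

Definition st : Type := (nat * positive)%type.

Definition stp (s : st) (x : sym) : st :=
  let (a, c) := s in
  match x with
  | O2 => (a, xO c) | I2 => (a, xI c)
  | O3 => (a, c * 3)%positive | I3 => (a, c * 3 + 1)%positive
  | T3 => (a, c * 3 + 2)%positive
  | Lhd | Rhd => (a + tz c, 1%positive)
  end.

Definition mu1 (w : list sym) : nat :=
  let (a, c) := fold_left stp w (0, 1%positive) in a + tz c.

Definition ist (x : sym) : nat := match x with O3 | I3 | T3 => 1 | _ => 0 end.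
Definition isb (x : sym) : nat := match x with O2 | I2 => 1 | _ => 0 end.
Fixpoint cntT (w : list sym) : nat := match w with [] => 0 | x :: w' => ist x + cntT w' end.
Fixpoint cntB (w : list sym) : nat := match w with [] => 0 | x :: w' => isb x + cntB w' end.
Fixpoint inv (w : list sym) : nat := match w with [] => 0 | x :: w' => isb x * cntT w' + inv w' end.

Lemma cntT_app : forall u w, cntT (u ++ w) = cntT u + cntT w.
Proof. induction u; simpl; intros; try rewrite IHu; lia. Qed.
Lemma cntB_app : forall u w, cntB (u ++ w) = cntB u + cntB w.
Proof. induction u; simpl; intros; try rewrite IHu; lia. Qed.
Lemma inv_app : forall u w, inv (u ++ w) = inv u + cntB u * cntT w + inv w.
Proof. induction u; simpl; intros; auto. rewrite IHu, cntT_app. nia. Qed.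

Lemma fold_shift : forall v a k c,
  fold_left stp v (a + k, c) =
  let (a', c') := fold_left stp v (a, c) in (a' + k, c').
Proof.
  induction v as [|x v IH]; intros a k c; simpl; auto.
  destruct x; simpl; try apply IH.
  replace (a + k + tz c) with (a + tz c + k) by lia. apply IH.
  replace (a + k + tz c) with (a + tz c + k) by lia. apply IH.
Qed.

Definition lexdec (x y : list sym) : Prop :=
  mu1 y < mu1 x \/ (mu1 y = mu1 x /\ (cntT y < cntT x \/ (cntT y = cntT x /\ inv y < inv x))).

Lemma mu1_eq : forall u v l r, (forall s, fold_left stp l s = fold_left stp r s) ->
  mu1 (u ++ l ++ v) = mu1 (u ++ r ++ v).
Proof. intros. unfold mu1. rewrite !fold_left_app, H. reflexivity. Qed.

Ltac mueq := match goal with |- context [mu1 (?u ++ ?r ++ ?v) < mu1 (?u ++ ?l ++ ?v)] =>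
  rewrite (mu1_eq u v r l) by (intros [a c]; cbn [fold_left stp]; f_equal; lia) end.

Lemma step_dec : forall x y, rstep W' x y -> lexdec x y.
Proof.
  intros x y [u v l r H]. unfold lexdec.
  simpl in H.
  repeat destruct H as [H|H]; try contradiction; inversion H; subst; clear H.
  { left. unfold mu1. rewrite !fold_left_app.
    destruct (fold_left stp u (0, 1%positive)) as [a c]. simpl.
    rewrite tz3. replace (a + S (tz c)) with (a + tz c + 1) by lia.
    rewrite (fold_shift v (a + tz c) 1). destruct (fold_left stp v (a + tz c, 1%positive)). lia. }
  all: mueq; right; split; [reflexivity|];
       rewrite ?inv_app, ?cntT_app, ?cntB_app; simpl; nia.
Qed.

Lemma noinf : forall a b c (f : nat -> list sym),
  mu1 (f 0) = a -> cntT (f 0) = b -> inv (f 0) = c ->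
  (forall n, rstep W' (f n) (f (S n))) -> False.
Proof.
  intro a. induction a as [a IHa] using lt_wf_ind.
  intro b. induction b as [b IHb] using lt_wf_ind.
  intro c. induction c as [c IHc] using lt_wf_ind.
  intros f H1 H2 H3 Hs.
  destruct (step_dec _ _ (Hs 0)) as [Hd|[He [Hd|[He2 Hd]]]].
  - apply (IHa (mu1 (f 1)) ltac:(lia) (cntT (f 1)) (inv (f 1)) (fun n => f (S n))); auto.
  - apply (IHb (cntT (f 1)) ltac:(lia) (inv (f 1)) (fun n => f (S n))); auto. simpl; lia.
  - apply (IHc (inv (f 1)) ltac:(lia) (fun n => f (S n))); auto; simpl; lia.
Qed.

Theorem mainTheorem9 : terminating W'.
Proof.
  intros [f Hf]. exact (noinf _ _ _ f eq_refl eq_refl eq_refl Hf).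
Qed.
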